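(* Let $T$ be a tree which is not barren and such that for every vertex $v$ of $T$ the set $\{t(a): a \text{ an arrow with } s(a)=v\}$ is finite. Then $T$ is not a source injective representation quiver.
   Context: A quiver is a directed graph with arrows $a$ having source $s(a)$ and target $t(a)$; a path is a finite composable sequence of arrows. A tree is a quiver $T$ with a vertex $r$ (the root) such that for every vertex $w$ there is a unique path from $r$ to $w$. The $i$-th stage of $T$ consists of the vertices whose path from the root has length $i$. $T$ is barren if the number $n_i$ of vertices in the $i$-th stage is finite for every $i$ and the sequence $n_1,n_2,\dots$ is eventually constant. A representation $X$ of a quiver $Q$ in $R\text{-Mod}$ assigns a left $R$-module $X(v)$ to each vertex and an $R$-linear map $X(a):X(s(a))\to X(t(a))$ to each arrow. A quiver $Q$ is a source injective representation quiver if for every ring $R$, a representation $X$ of $Q$ in $R\text{-Mod}$ is injective (in the category of representations) if and only if (i) $X(v)$ is an injective $R$-module for every vertex $v$, and (ii) for every vertex $v$ the map $X(v)\to\prod_{s(a)=v}X(t(a))$ induced by the maps $X(a)$ is a split epimorphism. *)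

(* Defs.v *)
From HB Require Import structures.
From mathcomp Require Import all_boot all_algebra.
Set Implicit Arguments. Unset Strict Implicit. Unset Printing Implicit Defensive.
Import GRing.Theory.
Local Open Scope ring_scope.

Section Quivers.
Variables (V A : Type) (s t : A -> V).

Fixpoint is_path (u : V) (p : seq A) (w : V) : Prop :=
  match p with
  | [::] => u = w
  | a :: p' => s a = u /\ is_path (t a) p' w
  end.

Definition is_root (r : V) : Prop :=
  forall w : V, exists! p : seq A, is_path r p w.

Definition is_tree : Prop := exists r : V, is_root r.

Definition has_card (P : V -> Prop) (n : nat) : Prop :=
  exists f : 'I_n -> V, injective f /\ (forall w, P w <-> exists i, f i = w).

Definition finite_pred (P : V -> Prop) : Prop := exists n, has_card P n.

Definition stage (r : V) (i : nat) (w : V) : Prop :=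
  exists p : seq A, is_path r p w /\ size p = i.

Definition barren (r : V) : Prop :=
  exists n : nat -> nat,
    (forall i, has_card (stage r i) (n i)) /\
    exists N c, forall i, (N <= i)%N -> n i = c.

Definition locally_finite : Prop :=
  forall v : V, finite_pred (fun w => exists a, s a = v /\ t a = w).

Record rep (R : nzRingType) := Rep {
  rep_mod : V -> lmodType R;
  rep_map : forall a : A, {linear rep_mod (s a) -> rep_mod (t a)}
}.

Definition is_rep_morph (R : nzRingType) (Y Z : rep R)
  (f : forall v, {linear rep_mod Y v -> rep_mod Z v}) : Prop :=
  forall (a : A) (y : rep_mod Y (s a)),
    f (t a) (rep_map Y a y) = rep_map Z a (f (s a) y).

(* Injective object in the category of representations (monomorphisms
   are the morphisms which are injective at every vertex). *)
Definition rep_injective (R : nzRingType) (X : rep R) : Prop :=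
  forall (Y Z : rep R) (f : forall v, {linear rep_mod Y v -> rep_mod Z v})
         (g : forall v, {linear rep_mod Y v -> rep_mod X v}),
    is_rep_morph f -> (forall v, injective (f v)) -> is_rep_morph g ->
    exists h : forall v, {linear rep_mod Z v -> rep_mod X v},
      is_rep_morph h /\ forall v (y : rep_mod Y v), h v (f v y) = g v y.

(* The product prod_{s(a)=v} X(t(a)) is represented by dependent functions
   on {a | s a = v}; the map X(v) -> product is x |-> (a |-> X(a) x).
   Split epimorphism: it has an R-linear right inverse. *)
Definition out_split_epi (R : nzRingType) (X : rep R) (v : V) : Prop :=
  exists sec : (forall a : {a : A | s a = v}, rep_mod X (t (sval a))) -> rep_mod X v,
    (forall (r : R) (F G : forall a : {a : A | s a = v}, rep_mod X (t (sval a))),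
        sec (fun a => r *: F a + G a) = r *: sec F + sec G) /\
    (forall (F : forall a : {a : A | s a = v}, rep_mod X (t (sval a)))
            (a : {a : A | s a = v}),
        rep_map X (sval a) (eq_rect_r (fun u => rep_mod X u) (sec F) (svalP a))
          = F a).

End Quivers.

Definition module_injective (R : nzRingType) (E : lmodType R) : Prop :=
  forall (M N : lmodType R) (i : {linear M -> N}) (g : {linear M -> E}),
    injective i -> exists h : {linear N -> E}, forall m, h (i m) = g m.

Definition source_injective_rep_quiver (V A : Type) (s t : A -> V) : Prop :=
  forall (R : nzRingType) (X : rep s t R),
    rep_injective X <->
    ((forall v, module_injective (rep_mod X v)) /\ (forall v, out_split_epi X v)).

(* Main.v *)
Require Import Defs.
From Stdlib Require List.
From HB Require Import structures.
From mathcomp Require Import all_boot all_algebra.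
From mathcomp Require Import boolp classical_sets functions zify.
Set Implicit Arguments. Unset Strict Implicit. Unset Printing Implicit Defensive.
Import GRing.Theory.
Local Open Scope ring_scope.
Definition mklin (R : pzRingType) (U W : lmodType R) (f : U -> W) (H : linear f) : {linear U -> W} :=
  HB.pack f (GRing.isLinear.Build R U W *:%R f H).
Section Inj.
Variables (K : fieldType) (E M N : lmodType K) (i : {linear M -> N}) (g : {linear M -> E}).
Hypothesis iinj : injective i.

Definition closedS (C : set N) := forall a x y, C x -> C y -> C (a *: x + y).
Definition good (C : set N) := closedS C /\ (forall m, C (i m) -> i m = 0).
Definition ext0 (C : set N) : set N := fun c => c = 0 \/ C c.

Lemma ext0_closed C : closedS C -> closedS (ext0 C).
Proof.
move=> HC a x y [->|Cx] [->|Cy]; rewrite /ext0.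
- by left; rewrite scaler0 addr0.
- by right; rewrite scaler0 add0r.
- right; rewrite addr0. have C0 : C 0 by rewrite -(addNr x) -scaleN1r; apply: HC.
  by rewrite -[a *: x]addr0; apply: HC.
- by right; apply: HC.
Qed.

Lemma ext0_cap C : good C -> forall m, ext0 C (i m) -> i m = 0.
Proof. by move=> [_ HC] m [->|/HC]. Qed.

Lemma exists_max : exists A, good A /\ forall B, (A `<` B)%classic -> ~ good B.
Proof.
apply: Zorn_bigcup => F FP Ftot; split.
- move=> a x y [X FX Xx] [Y FY Yy].
  have [XY|YX] := Ftot _ _ FX FY.
  + exists Y => //; apply: (proj1 (FP _ FY)) => //; exact: XY.
  + exists X => //; apply: (proj1 (FP _ FX)) => //; exact: YX.
- by move=> m [X FX Xm]; apply: (proj2 (FP _ FX)).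
Qed.

Lemma decomp A : good A -> (forall B, (A `<` B)%classic -> ~ good B) ->
  forall n, exists m c, ext0 A c /\ n = i m + c.
Proof.
move=> [cA capA] Amax n; apply: contrapT => Hn.
pose B : set N := fun y => exists l c, ext0 A c /\ y = c + l *: n.
have cA0 := ext0_closed cA.
have AB : (A `<` B)%classic.
split.
- by move=> c Ac; exists 0, c; split; [right|rewrite scale0r addr0].
- move=> /(_ n) H; apply: Hn; exists 0; exists n; split.
    by right; apply: H; exists 1, 0; split; [left|rewrite add0r scale1r].
  by rewrite linear0 add0r.
apply: (Amax B AB).
split.
- move=> a x y [l1 [c1 [Ac1 ->]]] [l2 [c2 [Ac2 ->]]].
  exists (a * l1 + l2), (a *: c1 + c2); split; first by apply: cA0.
  by rewrite scalerDr scalerDl scalerA addrACA.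
- move=> m [l [c [Ac E1]]].
  have [l0|lnz] := eqVneq l 0.
    by move: E1; rewrite l0 scale0r addr0 => E1; apply: (ext0_cap (conj cA capA)); rewrite E1.
  exfalso; apply: Hn; exists (l^-1 *: m), ((- l^-1) *: c); split.
    by rewrite -[_ *: c]addr0; apply: cA0 => //; left.
  rewrite linearZ /= E1 scalerDr scalerA mulVf // scale1r scaleNr addrC addKr.
    done.
Qed.

Lemma field_ext : exists h : {linear N -> E}, forall m, h (i m) = g m.
Proof.
have [A [gA Amax]] := exists_max.
have D := decomp gA Amax.
have cA0 := ext0_closed (proj1 gA).
have uniq : forall m1 m2 c1 c2, ext0 A c1 -> ext0 A c2 -> i m1 + c1 = i m2 + c2 -> m1 = m2.
  move=> m1 m2 c1 c2 A1 A2 E1.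
  have : i (m1 - m2) = 0.
    apply: (ext0_cap gA); rewrite linearB /=.
    have -> : i m1 - i m2 = c2 - c1.
      have -> : i m1 = i m2 + c2 - c1 by rewrite -E1 addrK.
      by rewrite addrAC [i m2 + c2]addrC addrK.
    rewrite -[c2 - c1]addrC -scaleN1r; exact: cA0.
  by rewrite -(linear0 i) => /iinj /eqP; rewrite subr_eq0 => /eqP.
pose mo n := projT1 (cid (D n)).
have moP n : exists c, ext0 A c /\ n = i (mo n) + c := projT2 (cid (D n)).
have moU n m c : ext0 A c -> n = i m + c -> mo n = m.
  move=> Ac En; have [c' [Ac' En']] := moP n.
  by apply: (uniq _ _ c' c) => //; rewrite -En' -En.
have hlin : linear (fun n => g (mo n)).
  move=> a x y; have [cx [Ax Ex]] := moP x; have [cy [Ay Ey]] := moP y.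
  rewrite (moU (a *: x + y) (a *: mo x + mo y) (a *: cx + cy)).
  - by rewrite linearP.
  - exact: cA0.
  - by rewrite linearP /= {1}Ex {1}Ey scalerDr addrACA.
exists (mklin hlin) => m /=.
by rewrite (moU (i m) m 0) //; [left|rewrite addr0].
Qed.
End Inj.

Lemma field_module_injective (K : fieldType) (E : lmodType K) : 
  forall (M N : lmodType K) (i : {linear M -> N}) (g : {linear M -> E}),
    injective i -> exists h : {linear N -> E}, forall m, h (i m) = g m.
Proof. by move=> M N i g Hi; apply: field_ext. Qed.
Section Tree.
Variables (V A : Type) (s t : A -> V) (r : V).
Hypothesis Hroot : is_root s t r.
Local Notation path := (is_path s t).
Definition desc (u w : V) := exists p, path u p w.

Lemma path_cat u p w q z : path u p w -> path w q z -> path u (p ++ q) z.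
Proof. by elim: p u => [|a p IH] u /= => [->|[Ha Hp] Hq]; [|split; last exact: IH]. Qed.

Lemma path_rcons u p a z : path u (rcons p a) z <-> path u p (s a) /\ t a = z.
Proof.
elim: p u => [|b p IH] u /=; first by split=> [[-> ->]|[-> ->]].
by rewrite IH; split=> [[? []]|[[]]].
Qed.

Lemma reach w : exists p, path r p w.
Proof. by have [p [Hp _]] := Hroot w; exists p. Qed.

Lemma uniq_r p q w : path r p w -> path r q w -> p = q.
Proof.
move=> Hp Hq; have [p0 [_ U]] := Hroot w.
by rewrite -(U _ Hp) -(U _ Hq).
Qed.

Lemma uniq_path v p q w : path v p w -> path v q w -> p = q.
Proof.
move=> Hp Hq; have [p0 H0] := reach v.
have := uniq_r (path_cat H0 Hp) (path_cat H0 Hq).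
by elim: p0 {H0} => //= a p0 IH [].
Qed.

Lemma acyc u p : path u p u -> p = [::].
Proof. by move=> H; apply: uniq_path H _. Qed.

Lemma desc_refl u : desc u u. Proof. by exists [::]. Qed.

Lemma desc_trans u v w : desc u v -> desc v w -> desc u w.
Proof. by move=> [p Hp] [q Hq]; exists (p ++ q); apply: path_cat Hp Hq. Qed.

Lemma desc_arrow a w : desc (t a) w -> desc (s a) w.
Proof. by move=> [p Hp]; exists (a :: p). Qed.

Lemma desc_antisym u w : desc u w -> desc w u -> u = w.
Proof.
move=> [p Hp] [q Hq]; have := acyc (path_cat Hp Hq).
by case: p Hp => [|a p] //= ->.
Qed.

Lemma notdesc_src a : ~ desc (t a) (s a).
Proof.
move=> [p Hp]; have : path (s a) (a :: p) (s a) by [].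
by move/acyc.
Qed.

Lemma arrow_det a b x : s a = s b -> desc (t a) x -> desc (t b) x -> a = b.
Proof.
move=> Es [p Hp] [q Hq].
have Ha : path (s a) (a :: p) x by [].
have Hb : path (s a) (b :: q) x by rewrite /= Es.
by case: (uniq_path Ha Hb).
Qed.

Hypothesis Hlf : locally_finite s t.

Definition branching (w : V) := exists a b, s a = w /\ s b = w /\ t a <> t b.
Definition Br (x : V) := forall N, exists w p, path x p w /\ (N <= size p)%N /\ branching w.

Lemma Br_child x : Br x -> exists a, s a = x /\ Br (t a).
Proof.
move=> Bx; apply: contrapT => Hno.
have Hb a : s a = x -> exists N, forall w p, path (t a) p w -> (N <= size p)%N -> ~ branching w.
  move=> Ha; have nB : ~ Br (t a) by move=> B; apply: Hno; exists a.
  apply: contrapT => HN; apply: nB => N; apply: contrapT => H1; apply: HN; exists N.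
  by move=> w p Hp HNp Hw; apply: H1; exists w, p.
have [n [e [einj He]]] := Hlf x.
have HNj (j : 'I_n) : exists N, forall w p, path (e j) p w -> (N <= size p)%N -> ~ branching w.
  have [a [Ha Ht]] : exists a, s a = x /\ t a = e j by apply/He; exists j.
  by have [N HN] := Hb a Ha; exists N; rewrite -Ht.
pose Nf j := projT1 (cid (HNj j)).
have [w [p [Hp [Hsz Hbr]]]] := Bx (\max_(j < n) Nf j).+1.
case: p Hp Hsz => [|a p] //= [Ha Hp] Hsz.
have [j Ej] : exists j, e j = t a by apply/He; exists a.
apply: (projT2 (cid (HNj j)) w p) => //; first by rewrite Ej.
move: Hsz; rewrite ltnS; apply: leq_trans; exact: (leq_bigmax (F := Nf) j).
Qed.

Lemma dedup (l : list V) : exists l', List.NoDup l' /\ forall w, List.In w l <-> List.In w l'.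
Proof.
elim: l => [|x l [l' [Nd H]]]; first by exists nil; split => //; constructor.
case: (pselect (List.In x l')) => Hx.
  exists l'; split => // w /=; rewrite H; split => [[<-|]|] //; by right.
exists (x :: l'); split; first by constructor.
by move=> w /=; rewrite H.
Qed.

Lemma stage_cover i : exists l, forall w, stage s t r i w <-> List.In w l.
Proof.
elim: i => [|i [l Hl]].
  exists (r :: nil) => w /=; split => [[p [Hp Hs]]|[<-|]] //.
  - by left; case: p Hp Hs.
  - by exists [::].
have cl x : exists l, forall w, (exists a, s a = x /\ t a = w) <-> List.In w l.
  have [n [e [einj He]]] := Hlf x.
  exists (List.map e (enum 'I_n)) => w; rewrite He List.in_map_iff.
  split=> [[j Ej]|[j [Ej _]]]; last by exists j.
  exists j; split => //.
  have : j \in enum 'I_n by rewrite mem_enum.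
  elim: (enum 'I_n) => //= k q IH; rewrite in_cons => /orP [/eqP ->|/IH]; by [left|right].
pose clf x := projT1 (cid (cl x)).
exists (List.flat_map clf l) => w; rewrite List.in_flat_map; split.
- move=> [p [Hp Hs]]; case/lastP: p Hp Hs => [|q a] //.
  rewrite path_rcons size_rcons => [[Hq Ht]] [Hs].
  exists (s a); split; first by apply/Hl; exists q.
  by apply/(projT2 (cid (cl (s a)))); exists a.
- move=> [x [Hx Hw]]; have [a [Ha Ht]] := (projT2 (cid (cl x)) w).2 Hw.
  have [q [Hq Hs]] := (Hl x).2 Hx.
  exists (rcons q a); rewrite path_rcons size_rcons Hs; split => //; split => //.
  by rewrite Ha.
Qed.

Lemma stage_list i : exists l, List.NoDup l /\ forall w, stage s t r i w <-> List.In w l.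
Proof.
have [l Hl] := stage_cover i; have [l' [Nd H]] := dedup l.
by exists l'; split => // w; rewrite Hl H.
Qed.

Lemma list_card (P : V -> Prop) l : List.NoDup l -> (forall w, P w <-> List.In w l) -> has_card P (length l).
Proof.
move=> Nd Hl; exists (fun j : 'I_(length l) => List.nth j l r); split.
  move=> j k E; apply: val_inj; move: Nd => /(List.NoDup_nth l r) Nd.
  by apply: Nd E; apply/ltP; exact: ltn_ord.
move=> w; rewrite Hl; split.
  move=> /(List.In_nth l w r) [j [/ltP Hj Ej]]; by exists (Ordinal Hj).
by move=> [j <-]; apply: List.nth_In; apply/ltP.
Qed.

Lemma evconst (f : nat -> nat) D : (forall i, (D <= i)%N -> (f i.+1 <= f i)%N) ->
  exists N c, forall i, (N <= i)%N -> f i = c.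
Proof.
move=> Hf.
have mono : forall D', (D <= D')%N -> forall i, (D' <= i)%N -> (f i <= f D')%N.
  move=> D' HD' i; elim: i => [|i IH]; first by rewrite leqn0 => /eqP ->.
  rewrite leq_eqVlt => /orP [/eqP <-|Hi] //.
  apply: leq_trans (IH Hi); apply: Hf; apply: leq_trans HD' _; exact: Hi.
move: {2}(f D) (leqnn (f D)) => m; elim: m D Hf mono => [|m IH] D' Hf mono HD.
  exists D', 0 => i Hi; apply/eqP; rewrite -leqn0; apply: leq_trans (mono _ (leqnn _) _ Hi) HD.
case: (pselect (forall i, (D' <= i)%N -> f i = f D')) => H.
  by exists D', (f D').
have [i [Hi Hne]] : exists i, (D' <= i)%N /\ f i <> f D'.
  apply: contrapT => H1; apply: H => i Hi; apply: contrapT => H2; apply: H1; by exists i.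
have Hlt : (f i < f D')%N by rewrite ltn_neqAle; apply/andP; split; [apply/eqP|apply: mono].
apply: (IH i).
- by move=> k Hk; apply: Hf; apply: leq_trans Hi Hk.
- by move=> D2 HD2; apply: mono; apply: leq_trans Hi HD2.
- by rewrite -ltnS; apply: leq_trans Hlt HD.
Qed.

Lemma notBr_barren : ~ Br r -> barren s t r.
Proof.
move=> nB.
have [D HD] : exists D, forall w p, path r p w -> (D <= size p)%N -> ~ branching w.
  apply: contrapT => H; apply: nB => N; apply: contrapT => H1; apply: H; exists N.
  by move=> w p Hp HN Hw; apply: H1; exists w, p.
pose L i := projT1 (cid (stage_list i)).
have LP i : List.NoDup (L i) /\ forall w, stage s t r i w <-> List.In w (L i)
  := projT2 (cid (stage_list i)).
exists (fun i => length (L i)); split.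
  by move=> i; have [Nd H] := LP i; exact: list_card.
apply: (@evconst _ D) => i Hi.
have [Nd1 H1] := LP i.+1; have [Nd0 H0] := LP i.
pose par w := match pselect (exists a, t a = w) with left H => s (projT1 (cid H)) | right _ => r end.
have parP : forall a q, path r (rcons q a) (t a) -> par (t a) = s a.
  move=> a q Hq; rewrite /par; case: pselect => [H|[]]; last by exists a.
  case: (cid H) => a' Ha' /=.
  have [q' Hq'] := reach (s a').
  have : rcons q' a' = rcons q a by apply: uniq_r Hq; rewrite path_rcons.
  by move/(congr1 (last a)); rewrite !last_rcons => ->.
have Hst : forall w, List.In w (L i.+1) -> exists q a, path r q (s a) /\ t a = w /\ size q = i.
  move=> w /H1 [p [Hp Hs]]; case/lastP: p Hp Hs => [|q a] //.
  rewrite path_rcons size_rcons => [[Hq Ht]] [Hs]; by exists q, a.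
rewrite -(List.length_map par).
apply/leP; apply: List.NoDup_incl_length.
- apply: List.NoDup_map_NoDup_ForallPairs Nd1 => w1 w2 /Hst [q1 [a1 [Hq1 [<- Hs1]]]].
  move=> /Hst [q2 [a2 [Hq2 [<- Hs2]]]].
  rewrite (parP a1 q1) ?path_rcons // (parP a2 q2) ?path_rcons // => E.
  apply: contrapT => Hne; apply: (HD (s a1) q1) => //; first by rewrite Hs1.
  by exists a1, a2; split => //; split.
- move=> u /List.in_map_iff [w [<- Hw]].
  have [q [a [Hq [Ht Hs]]]] := Hst w Hw.
  rewrite -Ht (parP a q) ?path_rcons //; apply/H0; by exists q.
Qed.

Hypothesis HBr : Br r.

Lemma nxt_ex x : exists a, Br x -> s a = x /\ Br (t a).
Proof.
case: (pselect (Br x)) => H; first by have [a Ha] := Br_child H; exists a.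
have [w [p [_ [_ [a [_ _]]]]]] := HBr 0; by exists a.
Qed.
Definition nxt x := projT1 (cid (nxt_ex x)).
Lemma nxtP x : Br x -> s (nxt x) = x /\ Br (t (nxt x)).
Proof. exact: projT2 (cid (nxt_ex x)). Qed.
Definition ray k := iter k (fun x => t (nxt x)) r.
Lemma ray_Br k : Br (ray k).
Proof. by elim: k => [|k IH] //=; apply: (nxtP IH).2. Qed.
Definition rarr k := nxt (ray k).
Lemma rarr_s k : s (rarr k) = ray k. Proof. exact: (nxtP (ray_Br k)).1. Qed.
Lemma rarr_t k : t (rarr k) = ray k.+1. Proof. by []. Qed.
Fixpoint rp k := match k with 0 => [::] | k'.+1 => rcons (rp k') (rarr k') end.
Lemma rp_path k : path r (rp k) (ray k).
Proof. by elim: k => [|k IH] //=; rewrite path_rcons rarr_s. Qed.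
Lemma size_rp k : size (rp k) = k.
Proof. by elim: k => [|k IH] //=; rewrite size_rcons IH. Qed.
Lemma rp_nth k i b : (i < k)%N -> nth b (rp k) i = rarr i.
Proof.
elim: k => [|k IH] //= Hi; rewrite nth_rcons size_rp.
case: ltnP => H; first exact: IH.
have Eik : i = k by apply/eqP; rewrite eqn_leq H andbT -ltnS.
by rewrite Eik eqxx.
Qed.

Lemma ray_branch K : exists k, (K <= k)%N /\ branching (ray k).
Proof.
apply: contrapT => H.
have nb : forall k, (K <= k)%N -> ~ branching (ray k).
  by move=> k Hk Hb; apply: H; exists k.
have [w [p [Hp [_ Hw]]]] := ray_Br K 0.
have : forall p m, path (ray (K + m)) p w -> w = ray (K + m + size p).
  elim=> [|a q IH] m /=; first by rewrite addn0.
  move=> [Ha Hq]; have Hta : t a = ray (K + m).+1.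
    apply: contrapT => Hne; apply: (nb (K + m)); first exact: leq_addr.
    by exists a, (rarr (K + m)); rewrite rarr_s rarr_t.
  by rewrite Hta -addnS in Hq; rewrite (IH _ Hq) /= !addnS addSn.
move=> /(_ p 0); rewrite addn0 => /(_ Hp) Ew.
by apply: (nb (K + size p)); [exact: leq_addr|rewrite -Ew].
Qed.

Definition offray c := exists k b, s b = ray k /\ t b = c /\ c <> ray k.+1.

Lemma offray_deep N : exists k b, s b = ray k /\ t b <> ray k.+1 /\ (N <= k)%N.
Proof.
have [k [Hk [a [b [Ha [Hb Hab]]]]]] := ray_branch N.
case: (pselect (t a = ray k.+1)) => Ea.
  by exists k, b; split => //; split => //; rewrite -Ea => /esym.
by exists k, a.
Qed.

Lemma offray_path k b : s b = ray k -> path r (rcons (rp k) b) (t b).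
Proof. by move=> Hb; rewrite path_rcons Hb; split => //; apply: rp_path. Qed.

Lemma antichain u c : offray u -> offray c -> desc c u -> u = c.
Proof.
move=> [k' [b' [Hb' [Hu Hn']]]] [k [b [Hb [Hc Hn]]]] [q Hq].
have P1 := offray_path Hb'; rewrite Hu in P1.
have P2 : path r (rcons (rp k) b ++ q) u by apply: path_cat (offray_path Hb) _; rewrite Hc.
have E := uniq_r P1 P2.
case: q Hq E P2 => [|a q] Hq E P2; first by rewrite Hq.
exfalso; apply: Hn; rewrite -Hc.
have Hk : (k < k')%N.
  have := congr1 size E; rewrite size_cat !size_rcons !size_rp /= => Hs.
  lia.
have := congr1 (fun l => nth b l k) E => /=.
rewrite nth_rcons size_rp Hk rp_nth // nth_cat size_rcons size_rp ltnSn nth_rcons size_rp ltnn eqxx => <-.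
by [].
Qed.

Definition Uset w := exists c, offray c /\ desc c w.
Lemma U_arrow a : Uset (s a) -> Uset (t a).
Proof.
move=> [c [Hc Hd]]; exists c; split => //; apply: desc_trans Hd _.
by exists [:: a].
Qed.
Lemma U_notoff a : Uset (s a) -> ~ offray (t a).
Proof.
move=> [c [Hc Hd]] Ho.
have E : t a = c := antichain Ho Hc (desc_trans Hd (ex_intro _ [:: a] (conj erefl erefl))).
by apply: (@notdesc_src a); rewrite E.
Qed.
Lemma off_U c : offray c -> Uset c.
Proof. by move=> H; exists c; split => //; apply: desc_refl. Qed.
End Tree.

Section XM.
Variables (V A : Type) (s t : A -> V) (r : V).
Local Notation path := (is_path s t).
Local Notation desc := (desc s t).

Definition Pb v (f : V -> rat^o) := (forall x, f x <> 0 -> desc v x) /\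
  exists N, forall x p, f x <> 0 -> path r p x -> (size p <= N)%N.

Lemma Pb0 v : Pb v 0.
Proof. by split => [x H|]; [exfalso; apply: H|exists 0%N => x p H; exfalso; apply: H]. Qed.

Lemma PbD v a f g : Pb v f -> Pb v g -> Pb v (a *: f + g).
Proof.
move=> [Sf [Nf Bf]] [Sg [Ng Bg]].
have H x : (a *: f + g) x <> 0 -> f x <> 0 \/ g x <> 0.
  move=> Hx; apply: contrapT => Hn; apply: Hx.
  have Hf : f x = 0 by apply: contrapT => Hf; apply: Hn; left.
  have Hg : g x = 0 by apply: contrapT => Hg; apply: Hn; right.
  have -> : (a *: f + g) x = a * f x + g x by [].
  by rewrite Hf Hg mulr0 addr0.
split=> [x /H [/Sf|/Sg] //|]; exists (maxn Nf Ng) => x p /H [Hx|Hx] Hp.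
- by apply: leq_trans (Bf _ _ Hx Hp) (leq_maxl _ _).
- by apply: leq_trans (Bg _ _ Hx Hp) (leq_maxr _ _).
Qed.

Definition pb v : {pred (V -> rat^o)} := fun f => `[< Pb v f >].
Lemma pb_closed v : subsemimod_closed (pb v).
Proof.
split; [split|].
- by apply/asboolP; exact: Pb0.
- move=> f g /asboolP Hf /asboolP Hg; apply/asboolP; rewrite -[f]scale1r; exact: PbD.
- move=> a f /asboolP Hf; apply/asboolP; rewrite -[a *: f]addr0; apply: PbD => //; exact: Pb0.
Qed.
HB.instance Definition _ v := GRing.isSubmodClosed.Build _ _ (pb v) (pb_closed v).
Record Xm v := MkX { xval : V -> rat^o; xP : pb v xval }.
HB.instance Definition _ v := [isSub for (@xval v)].
HB.instance Definition _ v := [Choice of Xm v by <:].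
HB.instance Definition _ v := [SubChoice_isSubLmodule of Xm v by <:].

Lemma xvalD v (x y : Xm v) : xval (x + y) = xval x + xval y. Proof. by []. Qed.
Lemma xvalZ v a (x : Xm v) : xval (a *: x) = a *: xval x. Proof. by []. Qed.
Lemma xval_inj v : injective (@xval v).
Proof. exact: val_inj. Qed.
Lemma xPb v (x : Xm v) : Pb v (xval x). Proof. exact/asboolP/(xP x). Qed.

Definition rfun w (g : V -> rat^o) : V -> rat^o :=
  fun x => if pselect (desc w x) then g x else 0.
Lemma rfun_pb v w g : pb v g -> pb w (rfun w g).
Proof.
move=> /asboolP [_ [N B]]; apply/asboolP; split.
  by move=> x; rewrite /rfun; case: (pselect (desc w x)) => [//|H0 H]; exfalso; apply: H.
exists N => x p; rewrite /rfun; case: (pselect (desc w x)) => [H0 Hx|H0 Hx]; [exact: B|by exfalso; apply: Hx].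
Qed.
Definition resf v w (f : Xm v) : Xm w := @MkX w (rfun w (xval f)) (rfun_pb w (xP f)).
Lemma resf_lin v w : linear (@resf v w).
Proof.
move=> a f g; apply: xval_inj; apply/funext => x.
change (rfun w (xval (a *: f + g)) x = a * rfun w (xval f) x + rfun w (xval g) x).
rewrite /rfun; case: (pselect (desc w x)) => H0 //.
by rewrite mulr0 addr0.
Qed.
Definition Xrep : rep s t rat := @Rep _ _ s t rat Xm (fun a => mklin (@resf_lin (s a) (t a))).
End XM.

Lemma fctE (T : Type) (f g : T -> rat^o) (c : rat) x : (c *: f + g) x = c * f x + g x.
Proof. by []. Qed.

Section Final.
Variables (V A : Type) (s t : A -> V) (r : V).
Hypothesis Hroot : is_root s t r.
Hypothesis Hlf : locally_finite s t.
Local Notation path := (is_path s t).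
Local Notation desc := (desc s t).
Local Notation Xm := (Xm s t r).

Definition secfun v (F : forall a : {a : A | s a = v}, Xm (t (sval a))) : V -> rat^o :=
  fun x => match pselect (exists a : {a : A | s a = v}, desc (t (sval a)) x) with
  | left H => xval (F (projT1 (cid H))) x | right _ => 0 end.

Lemma secfun_pb v F : pb s t r v (@secfun v F).
Proof.
apply/asboolP; split.
  move=> x; rewrite /secfun; case: pselect => [H|H]; last by move=> H1; exfalso; apply: H1.
  case: (cid H) => a Ha /= _; have := desc_arrow Ha; by rewrite (svalP a).
have [n [e [einj He]]] := Hlf v.
have HN (j : 'I_n) : exists N, forall a : {a | s a = v}, t (sval a) = e j ->
    forall x p, xval (F a) x <> 0 -> path r p x -> (size p <= N)%N.
  have [a0 [Ha0 Ht0]] : exists a, s a = v /\ t a = e j by apply/He; exists j.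
  have [_ [N B]] := xPb (F (exist _ a0 Ha0)).
  exists N => [[a Ha]] /= Ht x p.
  have E : a = a0.
    apply: (arrow_det Hroot (x := t a)); first by rewrite Ha Ha0.
      exact: desc_refl.
    by rewrite Ht -Ht0; exact: desc_refl.
  subst a; rewrite (Prop_irrelevance Ha Ha0); exact: B.
pose Nf j := projT1 (cid (HN j)).
exists (\max_(j < n) Nf j) => x p; rewrite /secfun; case: pselect => [H|H];
  last by move=> H1; exfalso; apply: H1.
case: (cid H) => a Ha /= Hx Hp.
have [j Ej] : exists j, e j = t (sval a) by apply/He; exists (sval a); split; [exact: (svalP a)|done].
apply: leq_trans (projT2 (cid (HN j)) a (esym Ej) x p Hx Hp) _.
exact: (leq_bigmax (F := Nf) j).
Qed.

Lemma Xsplit v : out_split_epi (Xrep s t r) v.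
Proof.
exists (fun F => MkX (secfun_pb F)); split.
  move=> c F G; apply: xval_inj; apply/funext => x.
  rewrite xvalD xvalZ /= fctE /secfun.
  case: (pselect (exists a : {a : A | s a = v}, desc (t (sval a)) x)) => H.
    by rewrite xvalD xvalZ fctE.
  by rewrite mulr0 addr0.
move=> F [a Ha] /=; subst v; rewrite /eq_rect_r /=.
rewrite (Prop_irrelevance (Logic.eq_sym _) (erefl (s a))) /=.
apply: xval_inj; apply/funext => x.
change (rfun s t (t a) (secfun F) x = xval (F (exist _ a erefl)) x).
rewrite /rfun; case: (pselect (desc (t a) x)) => Hd.
  rewrite /secfun; case: pselect => [H|H]; last by exfalso; apply: H; exists (exist (fun a0 => s a0 = s a) a erefl).
  case: (cid H) => [[a1 Ha1]] /= Hd1.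
  have E : a1 = a by apply: (arrow_det Hroot) Hd1 Hd.
  by subst a1; rewrite (Prop_irrelevance Ha1 erefl).
have [S _] := xPb (F (exist _ a erefl)).
apply: esym; apply: contrapT => Hx; apply: Hd; exact: S.
Qed.

Hypothesis HBr : Br s t r.
Local Notation U := (Uset Hlf HBr).
Local Notation offr := (offray Hlf HBr).

Definition ind w : rat := if pselect (U w) then 1 else 0.
Lemma ind1 w : U w -> ind w = 1. Proof. by rewrite /ind; case: pselect. Qed.
Lemma ind0 w : ~ U w -> ind w = 0. Proof. by rewrite /ind; case: pselect. Qed.

Definition scl (c : rat) : rat^o -> rat^o := fun x => c * x.
Lemma scl_lin c : linear (scl c).
Proof. by move=> a x y; rewrite /scl mulrDr mulrCA. Qed.
Definition Yrep : rep s t rat := @Rep _ _ s t rat (fun _ => rat^o) (fun a => mklin (scl_lin (ind (s a)))).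

Lemma pairE (a : rat) (x1 x2 y1 y2 : rat^o) :
  a *: ((x1, x2) : rat^o * rat^o) + (y1, y2) = (a *: x1 + y1, a *: x2 + y2).
Proof. by []. Qed.

Definition zfun (z : rat^o * rat^o) : rat^o * rat^o := (z.1, 0).
Lemma zlin : linear zfun.
Proof.
move=> a [x1 x2] [y1 y2]; rewrite /zfun /=.
have -> : a *: ((x1, 0) : rat^o * rat^o) + (y1, 0) = (a *: x1 + y1, a *: (0 : rat^o) + 0) by [].
by rewrite scaler0 addr0.
Qed.
Definition Zrep : rep s t rat := @Rep _ _ s t rat (fun _ => (rat^o * rat^o)%type) (fun a => mklin zlin).

Definition ffun w (c : rat^o) : rat^o * rat^o := (c * ind w, c * (1 - ind w)).
Lemma ffun_lin w : linear (ffun w).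
Proof.
move=> a x y; rewrite /ffun pairE; congr pair.
  by change ((a * x + y) * ind w = a * (x * ind w) + y * ind w); rewrite mulrDl mulrA.
by change ((a * x + y) * (1 - ind w) = a * (x * (1 - ind w)) + y * (1 - ind w)); rewrite mulrDl mulrA.
Qed.
Definition fm w : {linear rep_mod Yrep w -> rep_mod Zrep w} := mklin (ffun_lin w).

Definition Efun w : V -> rat^o := fun x => if pselect (offr w /\ x = w) then 1 else 0.
Lemma Efun_pb w : pb s t r w (Efun w).
Proof.
apply/asboolP; split.
  move=> x; rewrite /Efun; case: pselect => [[_ Ex] _|H0 H1]; first by rewrite Ex; exact: desc_refl.
  by exfalso; apply: H1.
have [p0 Hp0] := reach Hroot w.
exists (size p0) => x p; rewrite /Efun; case: pselect => [[_ Ex] _ Hp|H0 H1]; last by exfalso; apply: H1.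
by rewrite Ex in Hp; rewrite (uniq_r Hroot Hp Hp0).
Qed.
Definition Eel w : Xm w := MkX (Efun_pb w).
Definition gfun w (c : rat^o) : Xm w := c *: Eel w.
Lemma gfun_lin w : linear (gfun w).
Proof. by move=> a x y; rewrite /gfun scalerDl scalerA. Qed.
Definition gm w : {linear rep_mod Yrep w -> rep_mod (Xrep s t r) w} := mklin (gfun_lin w).

Lemma fmorph : is_rep_morph fm.
Proof.
move=> a y; rewrite /= /ffun /zfun /scl /=.
case: (pselect (U (s a))) => H.
  by rewrite (ind1 H) (ind1 (U_arrow H)) subrr !mul1r !mulr1 mulr0.
by rewrite (ind0 H) !mul0r mulr0.
Qed.

Lemma finj w : injective (fm w).
Proof.
move=> x y; rewrite /= /ffun => [[E1 E2]].
case: (pselect (U w)) => H.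
  by move: E1; rewrite (ind1 H) !mulr1.
by move: E2; rewrite (ind0 H) subr0 !mulr1.
Qed.

Lemma gmorph : is_rep_morph gm.
Proof.
move=> a y; apply: xval_inj; apply/funext => x.
change ((ind (s a) * y) * Efun (t a) x = rfun s t (t a) (fun x => y * Efun (s a) x) x).
rewrite /rfun /Efun.
case: (pselect (U (s a))) => H.
  rewrite (ind1 H).
  case: (pselect (offr (t a) /\ x = t a)) => [[Ho Ex]|H1].
    by exfalso; apply: (U_notoff Hroot H Ho).
  case: (pselect (desc (t a) x)) => Hd; last by rewrite mulr0.
  case: (pselect (offr (s a) /\ x = s a)) => [[Ho Ex]|H2]; last by rewrite !mulr0.
  by exfalso; apply: (@notdesc_src _ _ s t r Hroot a); rewrite -Ex.
rewrite (ind0 H) !mul0r.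
case: (pselect (desc (t a) x)) => Hd //.
case: (pselect (offr (s a) /\ x = s a)) => [[Ho Ex]|H2]; last by rewrite mulr0.
by exfalso; apply: H; apply: off_U.
Qed.

Lemma X_not_inj : ~ rep_injective (Xrep s t r).
Proof.
move=> HX; have [h [hm hf]] := HX Yrep Zrep fm gm fmorph finj gmorph.
pose z : rat^o * rat^o := (1, 0).
pose phi w := xval (h w z).
have step a x : desc (t a) x -> phi (t a) x = phi (s a) x.
  move=> Hd; have E : rep_map Zrep a z = z by [].
  have := hm a z; rewrite E /phi => ->.
  change (rfun s t (t a) (xval (h (s a) z)) x = xval (h (s a) z) x).
  by rewrite /rfun; case: pselect.
have trans : forall p u w, path u p w -> forall x, desc w x -> phi w x = phi u x.
  elim => [|a p IH] u w /=; first by move=> ->.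
  move=> [Ha Hp] x Hx; rewrite (IH _ _ Hp x Hx) -Ha; apply: step.
  by apply: desc_trans Hx; exists p.
have [_ [N B]] := xPb (h r z).
have [k [b [Hb [Hn Hk]]]] := offray_deep Hlf HBr N.
have Hoff : offr (t b) by exists k, b.
have Pc := offray_path Hb.
have E1 : phi (t b) (t b) = phi r (t b) := trans _ _ _ Pc _ (desc_refl _ _ _).
have E2 : phi (t b) (t b) = 1.
  have Hf : fm (t b) 1 = z by rewrite /= /ffun ind1 ?subrr ?mul1r //; exact: off_U.
  rewrite /phi -Hf hf.
  change (1 * Efun (t b) (t b) = 1); rewrite /Efun.
  case: (pselect (offr (t b) /\ t b = t b)) => [H0|H0]; first by rewrite mulr1.
  by exfalso; apply: H0.
have Hne : phi r (t b) <> 0 by rewrite -E1 E2; apply/eqP; exact: oner_neq0.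
have := B (t b) _ Hne Pc; rewrite size_rcons size_rp => Hle.
by move: (leq_trans Hle Hk); rewrite ltnn.
Qed.
End Final.

Theorem theorem5p3 (V A : Type) (s t : A -> V) (r : V) :
  is_root s t r -> ~ barren s t r -> locally_finite s t ->
  ~ source_injective_rep_quiver s t.
Proof.
move=> Hroot Hnb Hlf Hsi.
have HBr : Br s t r by apply: contrapT => nB; apply: Hnb; exact: notBr_barren.
apply: (X_not_inj Hroot Hlf HBr).
apply/(Hsi rat (Xrep s t r)); split => v.
  exact: field_module_injective.
exact: Xsplit.
Qed.
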